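(* For all graphs $G$ and $H$: if $G$ and $H$ are distinguishable by NC-1WL, then they are distinguishable by EB-1WL.
   Context: All graphs are finite, simple and undirected, without isolated vertices; $N(v)$ denotes the neighborhood of $v$. An ordered edge of $G=(V,E)$ is a pair $(u,v)$ with $\{u,v\}\in E$. EB-1WL coloring: $\mathrm{eb}^{(0)}(G,(u,v))=1$ for every ordered edge, and $\mathrm{eb}^{(\ell+1)}(G,(u,v)) = \big(\mathrm{eb}^{(\ell)}(G,(u,v)),\ \{\!\{\mathrm{eb}^{(\ell)}(G,(u,x)) : x\in N(u)\}\!\},\ \{\!\{(\mathrm{eb}^{(\ell)}(G,(u,y)),\mathrm{eb}^{(\ell)}(G,(v,y))) : y\in N(u)\cap N(v)\}\!\},\ \{\!\{\mathrm{eb}^{(\ell)}(G,(v,z)) : z\in N(v)\}\!\}\big)$. $\mathrm{eb}^{(\ell)}(G)$ is the multiset of $\mathrm{eb}^{(\ell)}(G,(u,v))$ over all ordered edges. $G$ and $H$ are distinguishable by EB-1WL if $|V(G)|\neq|V(H)|$ or there is $\ell$ with $\mathrm{eb}^{(\ell)}(G)\neq\mathrm{eb}^{(\ell)}(H)$. NC-1WL coloring of vertices: $\mathrm{nc}^{(0)}(G,v)=1$ and $\mathrm{nc}^{(\ell+1)}(G,v)=\big(\mathrm{nc}^{(\ell)}(G,v),\ \{\!\{\mathrm{nc}^{(\ell)}(G,u): u\in N(v)\}\!\},\ \{\!\{(\mathrm{nc}^{(\ell)}(G,u),\mathrm{nc}^{(\ell)}(G,w)) : u,w\in N(v),\ \{u,w\}\in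 E\}\!\}\big)$. $\mathrm{nc}^{(\ell)}(G)=\{\!\{\mathrm{nc}^{(\ell)}(G,v): v\in V\}\!\}$. $G$ and $H$ are distinguishable by NC-1WL if there is $\ell$ with $\mathrm{nc}^{(\ell)}(G)\neq\mathrm{nc}^{(\ell)}(H)$. Colors are nested tuples/multisets, comparable across graphs. *)

(* Defs.v *)
From mathcomp Require Import all_boot.
Set Implicit Arguments. Unset Strict Implicit. Unset Printing Implicit Defensive.

(* Colors are nested tuples / multisets, encoded as generic trees over nat
   (a countType, so colors from different graphs are comparable by Leibniz
   equality).  A multiset is encoded canonically by sorting its elements
   w.r.t. the injective encoding [pickle]; hence two lists give the same
   multiset color iff they are permutations of each other. *)
Definition color := GenTree.tree nat.

Definition cinit : color := GenTree.Leaf 1.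
Definition mset (s : seq color) : color :=
  GenTree.Node 1 (sort (fun x y : color => pickle x <= pickle y) s).
Definition cpair (a b : color) : color := GenTree.Node 2 [:: a; b].
Definition ctuple (s : seq color) : color := GenTree.Node 0 s.

Definition simple_graph (V : finType) (e : rel V) : Prop :=
  irreflexive e /\ symmetric e /\ (forall v : V, exists u : V, e v u).

Definition nbhd (V : finType) (e : rel V) (v : V) : seq V :=
  [seq x <- enum V | e v x].

(* EB-1WL colour of the ordered pair (u,v) (meaningful on ordered edges). *)
Fixpoint eb (V : finType) (e : rel V) (l : nat) (u v : V) : color :=
  match l with
  | 0 => cinit
  | l'.+1 =>
      ctuple [:: eb e l' u v;
                 mset [seq eb e l' u x | x <- nbhd e u];
                 mset [seq cpair (eb e l' u y) (eb e l' v y)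
                      | y <- [seq y <- nbhd e u | e v y]];
                 mset [seq eb e l' v z | z <- nbhd e v]]
  end.

Definition eb_graph (V : finType) (e : rel V) (l : nat) : color :=
  mset [seq eb e l p.1 p.2 | p <- enum [pred p : V * V | e p.1 p.2]].

Fixpoint nc (V : finType) (e : rel V) (l : nat) (v : V) : color :=
  match l with
  | 0 => cinit
  | l'.+1 =>
      ctuple [:: nc e l' v;
                 mset [seq nc e l' u | u <- nbhd e v];
                 mset [seq cpair (nc e l' p.1) (nc e l' p.2)
                      | p <- enum [pred p : V * V |
                                   [&& e v p.1, e v p.2 & e p.1 p.2]]]]
  end.

Definition nc_graph (V : finType) (e : rel V) (l : nat) : color :=
  mset [seq nc e l v | v <- enum V].

Definition eb_distinguishable (V W : finType) (eG : rel V) (eH : rel W) : Prop :=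
  #|V| <> #|W| \/ exists l : nat, eb_graph eG l <> eb_graph eH l.

Definition nc_distinguishable (V W : finType) (eG : rel V) (eH : rel W) : Prop :=
  exists l : nat, nc_graph eG l <> nc_graph eH l.

(* Main.v *)
Require Import Defs.
From mathcomp Require Import all_boot.
Set Implicit Arguments. Unset Strict Implicit.

Definition leC (x y : color) := pickle x <= pickle y.
Lemma leC_total : total leC.
Proof. by move=> x y; exact: leq_total. Qed.
Lemma leC_trans : transitive leC.
Proof. by move=> x y z h1 h2; exact: leq_trans h1 h2. Qed.
Lemma leC_anti : antisymmetric leC.
Proof. by move=> x y /anti_leq /(pcan_inj pickleK). Qed.

Lemma mset_perm s t : perm_eq s t -> mset s = mset t.
Proof.
move=> h; rewrite /mset; congr GenTree.Node.
exact: (perm_sortP leC_total leC_trans leC_anti).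
Qed.

Lemma mset_inj s t : mset s = mset t -> perm_eq s t.
Proof.
case=> h; exact/(perm_sortP leC_total leC_trans leC_anti).
Qed.

Definition contents (c : color) : seq color :=
  match c with GenTree.Node _ s => s | _ => [::] end.
Definition cc i c := nth cinit (contents c) i.
Definition mmap (f : color -> color) c := mset (map f (contents c)).
Definition down := mmap (cc 0).

Lemma contents_mset s : perm_eq (contents (mset s)) s.
Proof. by rewrite /mset /= perm_sort. Qed.

Lemma mmap_mset f s : mmap f (mset s) = mset (map f s).
Proof. exact/mset_perm/perm_map/contents_mset. Qed.

Fixpoint F l c := match l with 0 => cinit | l'.+1 =>
  ctuple [:: F l' (down (down c));
   mset [seq F l' (down (cc 3 x)) | x <- contents c];
   mset (flatten [seq [seq cpair (F l' (down (cc 3 x))) (F l' (cc 3 (cc 1 p)))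
                      | p <- contents (cc 2 x)] | x <- contents c])] end.

Definition E (V : finType) (e : rel V) k v := mset [seq eb e k v x | x <- nbhd e v].

Lemma down_E (V : finType) (e : rel V) k v : down (E e k.+1 v) = E e k v.
Proof. rewrite /down /E mmap_mset -map_comp; congr mset; exact: eq_map. Qed.

Lemma filter_pairs (T : Type) (s t : seq T) (A : pred T) (B : T -> pred T) :
  filter (fun p => A p.1 && B p.1 p.2) [seq (x,y) | x <- s, y <- t]
  = [seq (x,y) | x <- filter A s, y <- filter (B x) t].
Proof.
elim: s => //= a s IH; rewrite filter_cat IH filter_map.
case Ha: (A a) => /=.
  by congr (_ ++ _); congr map; apply: eq_filter => y /=; rewrite Ha.
by rewrite (@eq_filter _ _ pred0) ?filter_pred0 // => y /=; rewrite Ha.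
Qed.

Lemma perm_flatten_map (T S : eqType) (f g : T -> seq S) s :
  (forall x, x \in s -> perm_eq (f x) (g x)) ->
  perm_eq (flatten (map f s)) (flatten (map g s)).
Proof.
elim: s => //= a s IH H; apply: perm_cat; first by apply: H; rewrite inE eqxx.
by apply: IH => x xs; apply: H; rewrite inE xs orbT.
Qed.

Lemma enum_pairs (V : finType) (P : pred (V*V)) :
  enum [pred p : V * V | P p] = filter P [seq (x,y) | x <- enum V, y <- enum V].
Proof. rewrite {1}/enum_mem unlock /=. by []. Qed.

Lemma F_S l c : F l.+1 c = ctuple [:: F l (down (down c));
   mset [seq F l (down (cc 3 x)) | x <- contents c];
   mset (flatten [seq [seq cpair (F l (down (cc 3 x))) (F l (cc 3 (cc 1 p)))
                      | p <- contents (cc 2 x)] | x <- contents c])].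
Proof. by []. Qed.

Lemma nc_S (V : finType) (e : rel V) l v : nc e l.+1 v =
      ctuple [:: nc e l v;
                 mset [seq nc e l u | u <- nbhd e v];
                 mset [seq cpair (nc e l p.1) (nc e l p.2)
                      | p <- enum [pred p : V * V |
                                   [&& e v p.1, e v p.2 & e p.1 p.2]]]].
Proof. by []. Qed.

Lemma eb_S (V : finType) (e : rel V) l u v : eb e l.+1 u v =
      ctuple [:: eb e l u v;
                 mset [seq eb e l u x | x <- nbhd e u];
                 mset [seq cpair (eb e l u y) (eb e l v y)
                      | y <- [seq y <- nbhd e u | e v y]];
                 mset [seq eb e l v z | z <- nbhd e v]].
Proof. by []. Qed.

Lemma comp3_eb (V : finType) (e : rel V) k u v : cc 3 (eb e k.+1 u v) = E e k v.
Proof. by []. Qed.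
Lemma comp2_eb (V : finType) (e : rel V) k u v : cc 2 (eb e k.+1 u v) =
  mset [seq cpair (eb e k u y) (eb e k v y) | y <- [seq y <- nbhd e u | e v y]].
Proof. by []. Qed.
Lemma comp1_cpair a b : cc 1 (cpair a b) = b.
Proof. by []. Qed.

Lemma nc_F (V : finType) (e : rel V) l v : nc e l v = F l (E e l.*2 v).
Proof.
elim: l v => [|l IH] v //.
rewrite nc_S F_S doubleS.
congr ctuple; congr cons; first by rewrite !down_E IH.
congr cons.
  rewrite -/(mmap _ _) /E mmap_mset -map_comp; congr mset; apply: eq_map => x.
  by rewrite [in RHS]/comp comp3_eb down_E IH.
congr cons; apply: mset_perm.
set h := (fun x => [seq _ | p <- contents (cc 2 x)]).
rewrite perm_sym /E; apply: perm_trans (perm_flatten (perm_map h (contents_mset _))) _.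
rewrite -map_comp.
pose g := fun x => [seq cpair (nc e l x) (nc e l y) | y <- [seq y <- nbhd e v | e x y]].
have Hp : forall x, x \in nbhd e v -> perm_eq ((h \o eb e l.*2.+2 v) x) (g x).
  move=> x _; rewrite /h /comp comp2_eb.
  apply: perm_trans (perm_map _ (contents_mset _)) _.
  rewrite -map_comp /g; apply/permP => a; congr count; apply: eq_map => y.
  by rewrite [in LHS]/comp comp3_eb comp1_cpair comp3_eb !down_E !IH.
apply: perm_trans (perm_flatten_map Hp) _.
rewrite /g.
rewrite enum_pairs.
rewrite (filter_pairs _ _ (e v) (fun x y => e v y && e x y)).
rewrite map_flatten -map_comp /nbhd.
apply/permP => a; congr count; congr flatten; apply: eq_map => x /=.
rewrite -map_comp -filter_predI; congr map.
by apply: eq_filter => y /=; rewrite andbC.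
Qed.

Lemma size_contents_E (V : finType) (e : rel V) k x :
  size (contents (E e k x)) = size (nbhd e x).
Proof. by rewrite /E /mset /= size_sort size_map. Qed.

Lemma count_constP (T : Type) (a : pred T) (b : bool) s :
  a =1 (fun _ => b) -> count a s = b * size s.
Proof.
move=> H; elim: s => [|y s IH] /=; first by rewrite muln0.
by rewrite IH H; case: b {H IH}; rewrite ?mul1n ?mul0n.
Qed.

Lemma edges_count_aux (V : finType) (e : rel V) k c (s t : seq V) :
  (forall x, size (contents (E e k x)) = size (filter (e x) t)) ->
  count_mem c [seq E e k p.1 | p <- [seq (x,y) | x <- s, y <- filter (e x) t]]
  = count_mem c [seq E e k x | x <- s] * size (contents c).
Proof.
move=> Ht; elim: s => //= x s IH.
rewrite map_cat count_cat IH -map_comp count_map mulnDl; congr (_ + _).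
rewrite (@count_constP _ _ (E e k x == c)) //.
case: eqP => [<-|] //; by rewrite Ht.
Qed.

Lemma edges_count (V : finType) (e : rel V) k c :
  count_mem c [seq E e k p.1 | p <- enum [pred p : V * V | e p.1 p.2]]
  = count_mem c [seq E e k x | x <- enum V] * size (contents c).
Proof.
rewrite enum_pairs (filter_pairs _ _ predT (fun x y => e x y)) filter_predT.
by apply: edges_count_aux => x; rewrite size_contents_E.
Qed.

Lemma count_pos_size (V : finType) (e : rel V) k c :
  (forall v : V, exists u : V, e v u) ->
  0 < count_mem c [seq E e k x | x <- enum V] -> 0 < size (contents c).
Proof.
move=> Hn; rewrite -has_count => /hasP [y /mapP [x _ ->]] /= /eqP <-.
rewrite size_contents_E /nbhd size_filter -has_count.
have [u Hu] := Hn x; apply/hasP; exists u => //; exact: mem_enum.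
Qed.

Theorem mainTheorem3 (V W : finType) (eG : rel V) (eH : rel W) :
  simple_graph eG -> simple_graph eH ->
  nc_distinguishable eG eH -> eb_distinguishable eG eH.
Proof.
move=> [_ [_ nG]] [_ [_ nH]] [l Hl]; right; exists l.*2.+1 => Heb; apply: Hl.
have P1 := mset_inj Heb.
have P2 := perm_map (cc 1) P1.
rewrite -!map_comp in P2.
have P3 : perm_eq [seq E eG l.*2 p.1 | p <- enum [pred p : V * V | eG p.1 p.2]]
                  [seq E eH l.*2 p.1 | p <- enum [pred p : W * W | eH p.1 p.2]].
  by [].
have P4 : perm_eq [seq E eG l.*2 x | x <- enum V] [seq E eH l.*2 x | x <- enum W].
  apply/allP => c _; apply/eqP.
  have := permP P3 (pred1 c); rewrite !edges_count => Hc.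
  have [Hs|Hs] := posnP (size (contents c)).
    case: (posnP (count_mem c [seq E eG l.*2 x | x <- enum V])) => [->|/(count_pos_size nG)]; last by rewrite Hs.
    case: (posnP (count_mem c [seq E eH l.*2 x | x <- enum W])) => [->|/(count_pos_size nH)] //; by rewrite Hs.
  by apply/eqP; rewrite -(eqn_pmul2r Hs) Hc.
rewrite /nc_graph; apply: mset_perm.
rewrite (eq_map (nc_F eG l)) (eq_map (nc_F eH l)).
by rewrite (map_comp (F l) (E eG l.*2)) (map_comp (F l) (E eH l.*2)) perm_map.
Qed.
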